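(* Consider the linear program $\min\{c^\top x + d^\top y : Tx + Qy = h,\ x \in X,\ y \in Y\}$ and its epigraphical reformulation with feasible region $\mathcal{F} = \{(x,\theta) : x \in X,\ (h - Tx, \theta) \in \mathrm{epi}(f_Y)\}$. Let $\rho \in \mathbb{R}^n$ and $\rho_0 \ge 0$, and assume $\sigma_{\mathcal{F}}(\rho,\rho_0)$ is finite. Then the problem $$\max_{\alpha \in \mathbb{R}^p}\Big\{-\alpha^\top h + \sigma_X(\rho + T^\top \alpha) + \sigma_Y(Q^\top\alpha + \rho_0 d)\Big\}$$ has an optimal solution and its optimal value equals $\sigma_{\mathcal{F}}(\rho,\rho_0)$. Moreover, if $\hat\alpha$ is any optimal solution, then every $(x,\theta)$ with $x \in X$ that satisfies the Benders' cut $\hat\alpha^\top(h - Tx) + \rho_0 \theta \ge \sigma_{\mathrm{epi}(f_Y)}(\hat\alpha, \rho_0)$ also satisfies $\rho^\top x + \rho_0\theta \ge \sigma_{\mathcal{F}}(\rho,\rho_0)$.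
   Context: $X \subseteq \mathbb{R}^n$ and $Y \subseteq \mathbb{R}^m$ are nonempty polyhedra with rational data, $Y$ pointed; $T \in \mathbb{R}^{p\times n}$, $Q \in \mathbb{R}^{p \times m}$, $h \in \mathbb{R}^p$, $c \in \mathbb{R}^n$, $d \in \mathbb{R}^m$. For $\mathcal{X} \subseteq \mathbb{R}^t$, the support is $\sigma_{\mathcal{X}}(\alpha) := \inf_{x \in \mathcal{X}} \alpha^\top x$ (so $+\infty$ if $\mathcal{X}=\emptyset$), and for sets of pairs we write $\sigma_{\mathcal{X}}(\alpha,\gamma)$ for $\inf_{(x,y)\in\mathcal{X}}\{\alpha^\top x + \gamma^\top y\}$. For $\mathcal{Y} \subseteq \mathbb{R}^m$, $f_{\mathcal{Y}}(w) := \inf_{y \in \mathcal{Y}}\{d^\top y : Qy = w\}$ and $\mathrm{epi}(f_{\mathcal{Y}}) := \{(w,\theta) \in \mathbb{R}^p\times\mathbb{R} : \theta \ge f_{\mathcal{Y}}(w)\}$. A Benders' cut is an inequality $\alpha^\top w + \alpha_0\theta \ge \beta$ valid for $\mathrm{epi}(f_Y)$, applied with $w = h - Tx$. *)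

(* Defs.v *)
From HB Require Import structures.
From mathcomp Require Import all_boot all_order all_algebra.
From mathcomp Require Import all_classical all_reals all_analysis.
Set Implicit Arguments. Unset Strict Implicit. Unset Printing Implicit Defensive.
Import Order.TTheory GRing.Theory Num.Theory.
Local Open Scope classical_set_scope.
Local Open Scope ring_scope.

Section Defs.
Variable R : realType.

Definition dotv (k : nat) (u v : 'cV[R]_k) : R := \sum_(i < k) u i 0 * v i 0.

Definition polyhedron (k n : nat) (A : 'M[rat]_(k, n)) (b : 'cV[rat]_k)
  : set 'cV[R]_n :=
  [set x | forall i : 'I_k, (map_mx (@ratr R) A *m x) i 0 <= ratr (b i 0)].

Definition pointed (n : nat) (S : set 'cV[R]_n) : Prop :=
  forall (y v : 'cV[R]_n), (forall t : R, S (y + t *: v)) -> v = 0.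

(* support function sigma_S(a) = inf_{x in S} a^T x  (+oo if S empty) *)
Definition supp (n : nat) (S : set 'cV[R]_n) (a : 'cV[R]_n) : \bar R :=
  ereal_inf [set (dotv a x)%:E | x in S].

Definition supp2 (n : nat) (S : set ('cV[R]_n * R)) (a : 'cV[R]_n) (a0 : R)
  : \bar R :=
  ereal_inf [set (dotv a z.1 + a0 * z.2)%:E | z in S].

Definition fval (m p : nat) (Y : set 'cV[R]_m) (Q : 'M[R]_(p, m))
  (d : 'cV[R]_m) (w : 'cV[R]_p) : \bar R :=
  ereal_inf [set (dotv d y)%:E | y in [set y | Y y /\ Q *m y = w]].

Definition epi (m p : nat) (Y : set 'cV[R]_m) (Q : 'M[R]_(p, m))
  (d : 'cV[R]_m) : set ('cV[R]_p * R) :=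
  [set z | (fval Y Q d z.1 <= z.2%:E)%E].

Definition feasF (n m p : nat) (X : set 'cV[R]_n) (Y : set 'cV[R]_m)
  (T : 'M[R]_(p, n)) (Q : 'M[R]_(p, m)) (h : 'cV[R]_p) (d : 'cV[R]_m)
  : set ('cV[R]_n * R) :=
  [set z | X z.1 /\ epi Y Q d (h - T *m z.1, z.2)].

Definition dualobj (n m p : nat) (X : set 'cV[R]_n) (Y : set 'cV[R]_m)
  (T : 'M[R]_(p, n)) (Q : 'M[R]_(p, m)) (h : 'cV[R]_p) (d : 'cV[R]_m)
  (rho : 'cV[R]_n) (rho0 : R) (a : 'cV[R]_p) : \bar R :=
  ((- dotv a h)%:E + supp X (rho + T^T *m a) + supp Y (Q^T *m a + rho0 *: d))%E.

End Defs.

(* Main.v *)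
Require Import Defs.
From HB Require Import structures.
From mathcomp Require Import all_boot all_order all_algebra.
From mathcomp Require Import all_classical all_reals all_analysis.
From mathcomp Require Import ring lra.
From Stdlib Require List.
Set Implicit Arguments. Unset Strict Implicit. Unset Printing Implicit Defensive.
Import Order.TTheory GRing.Theory Num.Theory.
Local Open Scope ring_scope.

Section FM.
Variable R : realType.

Definition lin N (a z : 'I_N -> R) : R := \sum_(i < N) a i * z i.
Definition cstr N := (('I_N -> R) * R)%type.
Definition sat N (s : seq (cstr N)) (z : 'I_N -> R) :=
  forall c, List.In c s -> c.2 <= lin c.1 z.

Inductive der N (s : seq (cstr N)) : ('I_N -> R) -> R -> Prop :=
 | dmem a b : List.In (a,b) s -> der s a b
 | dzero b : b <= 0 -> der s (fun _ => 0) b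
 | dadd a1 b1 a2 b2 : der s a1 b1 -> der s a2 b2 ->
     der s (fun i => a1 i + a2 i) (b1 + b2)
 | dscale l a b : 0 <= l -> der s a b -> der s (fun i => l * a i) (l * b)
 | dweak a b b' : b' <= b -> der s a b -> der s a b'
 | dext a a' b : (forall i, a i = a' i) -> der s a b -> der s a' b.

Lemma between (Ls Us : seq R) :
  (forall l u, List.In l Ls -> List.In u Us -> l <= u) ->
  exists t, (forall l, List.In l Ls -> l <= t) /\ (forall u, List.In u Us -> t <= u).
Proof.
elim: Ls => [|l Ls IH] H.
  elim: Us {H} => [|u Us IHu]; first by exists 0.
  case: IHu => t [_ Ht].
  case: (leP u t) => hut.
    exists u; split => // v [<-|/Ht]; lra.
  exists t; split => // v [<-|/Ht]; lra.
case: IH => [l' u hl hu|t [Hl Hu]]; first by apply: H => //; right.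
case: (leP l t) => hlt.
  exists t; split => // v [<-|/Hl] //.
exists l; split.
  by move=> v [<-|/Hl]; lra.
by move=> u hu; apply: H => //; left.
Qed.

Definition restr N (a : 'I_N.+1 -> R) : 'I_N -> R :=
  fun j => a (widen_ord (leqnSn N) j).
Definition ext N (z : 'I_N -> R) (t : R) : 'I_N.+1 -> R :=
  fun i => match unlift ord_max i with Some j => z j | None => t end.

Lemma ext_w N (z : 'I_N -> R) t j : ext z t (widen_ord (leqnSn N) j) = z j.
Proof.
rewrite /ext.
have -> : widen_ord (leqnSn N) j = lift ord_max j by by apply: val_inj; rewrite /= /bump leqNgt ltn_ord.
by rewrite liftK.
Qed.

Lemma ext_max N (z : 'I_N -> R) t : ext z t ord_max = t.
Proof. by rewrite /ext unlift_none. Qed.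

Lemma restr_ext N (z : 'I_N -> R) t j : restr (ext z t) j = z j.
Proof. exact: ext_w. Qed.

Lemma ext_restr N (a : 'I_N.+1 -> R) i : ext (restr a) (a ord_max) i = a i.
Proof.
rewrite /ext; case: unliftP => [j ->|-> //].
by rewrite /restr; congr a; apply: val_inj; rewrite /= /bump leqNgt ltn_ord.
Qed.

Lemma lin_split N (a z : 'I_N.+1 -> R) :
  lin a z = lin (restr a) (restr z) + a ord_max * z ord_max.
Proof. by rewrite /lin big_ord_recr. Qed.

Lemma lin_ext N (a : 'I_N.+1 -> R) z t :
  lin a (ext z t) = lin (restr a) z + a ord_max * t.
Proof.
rewrite lin_split ext_max; congr (_ + _); apply: eq_bigr => i _.
by rewrite restr_ext.
Qed.

Lemma lin_extl N (f : 'I_N -> R) t (w : 'I_N.+1 -> R) :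
  lin (ext f t) w = lin f (restr w) + t * w ord_max.
Proof.
rewrite lin_split ext_max; congr (_ + _); apply: eq_bigr => i _.
by rewrite restr_ext.
Qed.

Lemma linZr N (a z : 'I_N -> R) k : lin a (fun i => k * z i) = k * lin a z.
Proof. rewrite /lin mulr_sumr; apply: eq_bigr => i _; ring. Qed.

Lemma linDr N (a z w : 'I_N -> R) : lin a (fun i => z i + w i) = lin a z + lin a w.
Proof. rewrite /lin -big_split; apply: eq_bigr => i _ /=; ring. Qed.

Definition lastc N (c : cstr N.+1) := c.1 ord_max.
Definition comb N (p q : cstr N.+1) : cstr N :=
  (fun j => - lastc q * restr p.1 j + lastc p * restr q.1 j,
   - lastc q * p.2 + lastc p * q.2).
Definition elim N (s : seq (cstr N.+1)) : seq (cstr N) :=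
  List.app
   (List.map (fun c => (restr c.1, c.2)) (List.filter (fun c => lastc c == 0) s))
   (List.flat_map (fun p => List.map (comb p) (List.filter (fun c => lastc c < 0) s))
      (List.filter (fun c => 0 < lastc c) s)).

Lemma elim_sat N (s : seq (cstr N.+1)) z :
  sat (elim s) z -> exists t, sat s (ext z t).
Proof.
move=> H.
pose L (c : cstr N.+1) := (c.2 - lin (restr c.1) z) / lastc c.
have hb : forall l u, List.In l (List.map L (List.filter (fun c => 0 < lastc c) s)) ->
  List.In u (List.map L (List.filter (fun c => lastc c < 0) s)) -> l <= u.
  move=> l u /List.in_map_iff [pp [<- /List.filter_In [ps pl]]]
              /List.in_map_iff [qq [<- /List.filter_In [qs ql]]].
  have hc : List.In (comb pp qq) (elim s).
    apply/List.in_app_iff; right; apply/List.in_flat_map; exists pp.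
    split; first by apply/List.filter_In.
    by apply/List.in_map_iff; exists qq; split => //; apply/List.filter_In.
  have := H _ hc; rewrite /comb /= /lin.
  rewrite (eq_bigr (fun j => - lastc qq * (restr pp.1 j * z j) + lastc pp * (restr qq.1 j * z j)));
    last by move=> j _; ring.
  rewrite big_split /= -!mulr_sumr -!/(lin _ _) => hh.
  rewrite /L.
  have p0 : 0 < lastc pp by [].
  have q0 : lastc qq < 0 by [].
  set A := pp.2 - _; set B := qq.2 - _.
  have e : B / lastc qq - A / lastc pp =
      (- (- lastc qq * A + lastc pp * B)) / (lastc pp * - lastc qq).
    by field; apply/andP; split; apply/eqP => e0; rewrite e0 in p0 q0; rewrite ltxx in p0 q0.
  have : 0 <= (- (- lastc qq * A + lastc pp * B)) / (lastc pp * - lastc qq).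
    apply: divr_ge0; last by rewrite ltW // mulr_gt0 // oppr_gt0.
    rewrite /A /B; lra.
  lra.
have [t [Ht1 Ht2]] := between hb.
exists t => c hc; rewrite lin_ext.
have [cn|cp|c0] := ltgtP (lastc c) 0.
- have : t <= L c by apply: Ht2; apply/List.in_map_iff; exists c; split => //; apply/List.filter_In; split.
  rewrite /L /lastc in cn *.
  have e : (c.2 - lin (restr c.1) z) / c.1 ord_max - t =
     (lin (restr c.1) z + c.1 ord_max * t - c.2) / (- c.1 ord_max).
    by field; apply/eqP => e0; rewrite e0 ltxx in cn.
  have : 0 <= (lin (restr c.1) z + c.1 ord_max * t - c.2) / (- c.1 ord_max) -> c.2 <= lin (restr c.1) z + c.1 ord_max * t.
    rewrite pmulr_lge0 ?invr_gt0 ?oppr_gt0 //; lra.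
  lra.
- have : L c <= t by apply: Ht1; apply/List.in_map_iff; exists c; split => //; apply/List.filter_In; split.
  rewrite /L /lastc in cp *.
  have e : t - (c.2 - lin (restr c.1) z) / c.1 ord_max =
     (lin (restr c.1) z + c.1 ord_max * t - c.2) / (c.1 ord_max).
    by field; apply/eqP => e0; rewrite e0 ltxx in cp.
  have : 0 <= (lin (restr c.1) z + c.1 ord_max * t - c.2) / (c.1 ord_max) -> c.2 <= lin (restr c.1) z + c.1 ord_max * t.
    rewrite pmulr_lge0 ?invr_gt0 //; lra.
  lra.
- have hc' : List.In (restr c.1, c.2) (elim s).
    apply/List.in_app_iff; left; apply/List.in_map_iff; exists c; split => //.
    by apply/List.filter_In; split => //; apply/eqP.
  have := H _ hc'; rewrite /lastc in c0; rewrite c0 /=; lra.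
Qed.


Lemma der_lift N (s : seq (cstr N.+1)) a b :
  der (elim s) a b -> der s (ext a 0) b.
Proof.
elim=> {a b}.
- move=> a b /List.in_app_iff [/List.in_map_iff [c [[<- <-] /List.filter_In [cs /eqP c0]]]
        | /List.in_flat_map [pp [/List.filter_In [ps pl] /List.in_map_iff [qq [e /List.filter_In [qs ql]]]]]].
    apply: (dext (a := c.1)); last by case: c cs {c0} => ? ? ?; apply: dmem.
    by move=> i; rewrite -c0 ext_restr.
  case: e => <- <-.
  pose g i := - lastc qq * pp.1 i + lastc pp * qq.1 i.
  apply: (dext (a := g)).
    move=> i; have g0 : g ord_max = 0 by rewrite /g /lastc; ring.
    by rewrite -[LHS](ext_restr g) g0.
  apply: dadd; apply: dscale.
  + by rewrite oppr_ge0 ltW.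
  + by case: pp ps {pl g} => ? ? ?; apply: dmem.
  + by rewrite ltW.
  + by case: qq qs {ql g} => ? ? ?; apply: dmem.
- move=> b b0; apply: (dext (a := fun _ => 0)); last exact: dzero.
  by move=> i; rewrite /ext; case: unlift.
- move=> a1 b1 a2 b2 _ h1 _ h2; apply: (dext _ (dadd h1 h2)).
  by move=> i; rewrite /ext; case: unlift => //; rewrite addr0.
- move=> l a b l0 _ h; apply: (dext _ (dscale l0 h)).
  by move=> i; rewrite /ext; case: unlift => //; rewrite mulr0.
- by move=> a b b' hb _ h; apply: dweak h.
- move=> a a' b e _ h; apply: (dext _ h).
  by move=> i; rewrite /ext; case: unlift.
Qed.

Lemma farkas_inf N (s : seq (cstr N)) :
  ~ (exists z, sat s z) -> exists b, 0 < b /\ der s (fun _ => 0) b.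
Proof.
elim: N s => [|N IH] s H.
  have : ~ sat s (fun _ => 0) by move=> hs; apply: H; exists (fun _ => 0).
  move/existsNP => [c /not_implyP [cs hc]].
  exists c.2; split.
    by rewrite /lin big_ord0 in hc; rewrite ltNge; apply/negP.
  apply: (dext (a := c.1)); first by case.
  by case: c cs {hc} => ? ? ?; apply: dmem.
have [b [b0 hb]] : exists b, 0 < b /\ der (elim s) (fun _ => 0) b.
  apply: IH => -[z hz]; apply: H.
  by have [t ht] := elim_sat hz; exists (ext z t).
exists b; split => //; apply: (dext _ (der_lift hb)).
by move=> i; rewrite /ext; case: unlift.
Qed.


Definition hom N (c : cstr N) : cstr N.+1 := (ext c.1 (- c.2), 0).

Lemma farkas_aff N (s : seq (cstr N)) a b :
  (exists z, sat s z) -> (forall z, sat s z -> b <= lin a z) -> der s a b.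
Proof.
move=> [z0 hz0] Himp.
pose ss := List.app (List.map (@hom N) s)
   [:: (ext (fun _ => 0) 1, 0); (ext (fun i => - a i) b, 1)].
have Hinf : ~ (exists w, sat ss w).
  move=> [w hw].
  set z := restr w; set tau := w ord_max.
  have hom_ok c : List.In c s -> 0 <= lin c.1 z - c.2 * tau.
    move=> cs; have := hw (hom c) (List.in_or_app _ _ _ (or_introl (List.in_map _ _ _ cs))).
    rewrite /= lin_extl /z /tau; lra.
  have tau0 : 0 <= tau.
    have := hw (ext (fun _ => 0) 1, 0); rewrite /= lin_extl.
    have -> : lin (fun _ : 'I_N => 0) (restr w) = 0 by rewrite /lin big1 // => i _; rewrite mul0r.
    move=> h; have := h (List.in_or_app _ _ _ (or_intror (List.in_eq _ _))); rewrite /tau; lra.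
  have hlast : 1 <= - lin a z + b * tau.
    have := hw (ext (fun i => - a i) b, 1); rewrite /= lin_extl.
    have -> : lin (fun i => - a i) (restr w) = - lin a z.
      by rewrite /lin -sumrN; apply: eq_bigr => i _; rewrite mulNr.
    move=> h; have := h (List.in_or_app _ _ _ (or_intror (List.in_cons _ _ _ (List.in_eq _ _)))); rewrite /tau; lra.
  have [t0|tp] := eqVneq tau 0.
    have hz1 : forall l, 0 <= l -> b <= lin a z0 + l * lin a z.
      move=> l l0; rewrite -linZr -linDr; apply: Himp => c cs.
      rewrite linDr linZr; have := hz0 c cs; have := hom_ok c cs; rewrite t0 mulr0 subr0.
      move=> h1 h2; have : 0 <= l * lin c.1 z by rewrite mulr_ge0.
      lra.
    set D := lin a z0 - b.
    have l0 : 0 <= `|D| + 1 by rewrite addr_ge0 // normr_ge0.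
    have := hz1 _ l0; have := ler_norm D; rewrite t0 mulr0 addr0 in hlast.
    move=> h1 h2.
    have : (`|D| + 1) * lin a z <= - (`|D| + 1).
      rewrite -mulrN1; apply: ler_wpM2l => //; lra.
    rewrite /D in h1 *; lra.
  have tpos : 0 < tau by rewrite lt0r tp.
  have : b <= lin a (fun i => tau^-1 * z i).
    apply: Himp => c cs; rewrite linZr; have := hom_ok c cs => h.
    rewrite ler_pdivlMl //; lra.
  rewrite linZr ler_pdivlMl //; lra.
have [beta [beta0 hbeta]] := farkas_inf Hinf.
pose Good (A : 'I_N.+1 -> R) (B : R) := exists nu e, 0 <= nu /\
  der s (fun i => restr A i + nu * a i) e /\ - e + nu * b <= A ord_max /\ B <= nu.
have : Good (fun _ => 0) beta.
  elim: hbeta {beta0} => {beta}.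
  - move=> A B /List.in_app_iff [/List.in_map_iff [c [e cs]] | hin].
      case: e => <- <-; exists 0, c.2; split => //; split.
        apply: (dext (a := c.1)); first by move=> i; rewrite mul0r addr0 restr_ext.
        by case: c cs => ? ? ?; apply: dmem.
      by rewrite ext_max mul0r addr0.
    case: hin => [[<- <-]|[[<- <-]|[]]].
      exists 0, 0; split => //; split.
        apply: (dext (a := fun _ => 0)); last exact: dzero.
        by move=> i; rewrite mul0r addr0 restr_ext.
      by rewrite ext_max mul0r addr0 oppr0.
    exists 1, 0; split => //; split.
      apply: (dext (a := fun _ => 0)); last exact: dzero.
      by move=> i; rewrite mul1r restr_ext addNr.
    by rewrite ext_max mul1r oppr0 add0r.
  - move=> B B0; exists 0, 0; split => //; split.
      apply: (dext (a := fun _ => 0)); last exact: dzero.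
      by move=> i; rewrite mul0r addr0.
    by rewrite mul0r addr0 oppr0.
  - move=> A1 B1 A2 B2 _ [n1 [e1 [n10 [d1 [h1 k1]]]]] _ [n2 [e2 [n20 [d2 [h2 k2]]]]].
    exists (n1 + n2), (e1 + e2); split; first by rewrite addr_ge0.
    split; last by split; lra.
    by apply: (dext _ (dadd d1 d2)) => i; rewrite /restr; ring.
  - move=> l A B l0 _ [n1 [e1 [n10 [d1 [h1 k1]]]]].
    exists (l * n1), (l * e1); split; first by rewrite mulr_ge0.
    split; first by apply: (dext _ (dscale l0 d1)) => i; rewrite /restr; ring.
    split.
      have : 0 <= l * (A ord_max - (- e1 + n1 * b)) by rewrite mulr_ge0 // subr_ge0.
      lra.
    by rewrite ler_wpM2l.
  - move=> A B B' hB _ [n1 [e1 [n10 [d1 [h1 k1]]]]].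
    exists n1, e1; do !split => //; lra.
  - move=> A A' B eA _ [n1 [e1 [n10 [d1 [h1 k1]]]]].
    exists n1, e1; do !split => //; last by rewrite -eA.
    by apply: (dext _ d1) => i; rewrite /restr eA.
move=> [nu [e [nu0 [d [h1 k1]]]]].
have nup : 0 < nu by apply: (lt_le_trans beta0 k1).
apply: (@dweak _ _ _ (nu^-1 * e)).
  rewrite ler_pdivlMl //; lra.
have ni : 0 <= nu^-1 by rewrite invr_ge0 ltW.
apply: (dext _ (dscale ni d)) => i.
by rewrite /restr add0r mulrA mulVf ?mul1r // gt_eqF.
Qed.

End FM.

Section App.
Variable R : realType.
Variables (n m p kX kY : nat) (AX : 'M[rat]_(kX, n)) (bX : 'cV[rat]_kX)
  (AY : 'M[rat]_(kY, m)) (bY : 'cV[rat]_kY)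
  (T : 'M[R]_(p, n)) (Q : 'M[R]_(p, m)) (h : 'cV[R]_p) (d : 'cV[R]_m)
  (rho : 'cV[R]_n) (rho0 : R).

Local Notation X := (@polyhedron R _ _ AX bX).
Local Notation Y := (@polyhedron R _ _ AY bY).

Definition catf (f : 'I_n -> R) (g : 'I_m -> R) : 'I_(n+m) -> R :=
  fun i => match fintype.split i with inl j => f j | inr j => g j end.
Definition vc k (x : 'cV[R]_k) : 'I_k -> R := fun j => x j 0.

Lemma split_l (j : 'I_n) : fintype.split (lshift m j) = inl j.
Proof. by rewrite -[lshift m j]/(@unsplit n m (inl j)) unsplitK. Qed.
Lemma split_r (j : 'I_m) : fintype.split (rshift n j) = inr j.
Proof. by rewrite -[rshift n j]/(@unsplit n m (inr j)) unsplitK. Qed.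

Lemma lin_cat f g x y :
  lin (catf f g) (catf x y) = lin f x + lin g y.
Proof.
rewrite /lin big_split_ord /catf; congr (_ + _); apply: eq_bigr => j _.
  by rewrite split_l.
by rewrite split_r.
Qed.

Lemma lin_ext_eq k (a z z' : 'I_k -> R) : (forall i, z i = z' i) -> lin a z = lin a z'.
Proof. by move=> e; apply: eq_bigr => i _; rewrite e. Qed.
Lemma lin_ext_eql k (a a' z : 'I_k -> R) : (forall i, a i = a' i) -> lin a z = lin a' z.
Proof. by move=> e; apply: eq_bigr => i _; rewrite e. Qed.

Lemma linNl k (a z : 'I_k -> R) : lin (fun i => - a i) z = - lin a z.
Proof. by rewrite /lin -sumrN; apply: eq_bigr => i _; rewrite mulNr. Qed.
Lemma lin0l k (z : 'I_k -> R) : lin (fun _ => 0) z = 0.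
Proof. by rewrite /lin big1 // => i _; rewrite mul0r. Qed.
Lemma linDl k (a b z : 'I_k -> R) : lin (fun i => a i + b i) z = lin a z + lin b z.
Proof. by rewrite /lin -big_split; apply: eq_bigr => i _; rewrite mulrDl. Qed.
Lemma linZl k (a z : 'I_k -> R) l : lin (fun i => l * a i) z = l * lin a z.
Proof. by rewrite /lin mulr_sumr; apply: eq_bigr => i _; rewrite mulrA. Qed.

Lemma lin_mx k l (A : 'M[R]_(k, l)) x i : lin (fun j => A i j) (vc x) = (A *m x) i 0.
Proof. by rewrite mxE. Qed.

Lemma dotvE k (u w : 'cV[R]_k) : dotv u w = (u^T *m w) 0 0.
Proof. by rewrite mxE; apply: eq_bigr => i _; rewrite mxE. Qed.

Lemma dotv_mul k l (u : 'cV[R]_k) (A : 'M[R]_(k, l)) w :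
  dotv u (A *m w) = dotv (A^T *m u) w.
Proof. by rewrite !dotvE trmx_mul trmxK mulmxA. Qed.

Lemma dotvDl k (u v w : 'cV[R]_k) : dotv (u + v) w = dotv u w + dotv v w.
Proof. by rewrite !dotvE linearD /= mulmxDl mxE. Qed.
Lemma dotvDr k (u v w : 'cV[R]_k) : dotv w (u + v) = dotv w u + dotv w v.
Proof. by rewrite !dotvE mulmxDr mxE. Qed.
Lemma dotvNr k (u w : 'cV[R]_k) : dotv w (- u) = - dotv w u.
Proof. by rewrite !dotvE mulmxN mxE. Qed.
Lemma dotvZl k (u w : 'cV[R]_k) l : dotv (l *: u) w = l * dotv u w.
Proof. by rewrite !dotvE linearZ /= -scalemxAl mxE. Qed.
Lemma dotv0l k (w : 'cV[R]_k) : dotv 0 w = 0.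
Proof. by rewrite dotvE trmx0 mul0mx mxE. Qed.

Definition AXr i j : R := ratr (AX i j).
Definition AYr i j : R := ratr (AY i j).
Definition rowX i : cstr R (n + m) :=
  (catf (fun j => - AXr i j) (fun _ => 0), - ratr (bX i 0)).
Definition rowY i : cstr R (n + m) :=
  (catf (fun _ => 0) (fun j => - AYr i j), - ratr (bY i 0)).
Definition rowP k : cstr R (n + m) :=
  (catf (fun j => T k j) (fun j => Q k j), h k 0).
Definition rowN k : cstr R (n + m) :=
  (catf (fun j => - T k j) (fun j => - Q k j), - h k 0).
Definition sys := List.app (List.map rowX (enum 'I_kX))
  (List.app (List.map rowY (enum 'I_kY))
  (List.app (List.map rowP (enum 'I_p)) (List.map rowN (enum 'I_p)))).

Lemma in_enum_list (F : finType) (i : F) : List.In i (enum F).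
Proof.
have : i \in enum F by rewrite mem_enum.
elim: (enum F) => //= a s IH; rewrite inE => /orP [/eqP ->|/IH]; by [left|right].
Qed.

Lemma AXmul i x : lin (fun j => AXr i j) (vc x) = (map_mx ratr AX *m x) i 0.
Proof. by rewrite mxE; apply: eq_bigr => j _; rewrite mxE. Qed.
Lemma AYmul i y : lin (fun j => AYr i j) (vc y) = (map_mx ratr AY *m y) i 0.
Proof. by rewrite mxE; apply: eq_bigr => j _; rewrite mxE. Qed.

Lemma rowP_lin k x y : lin (rowP k).1 (catf (vc x) (vc y)) = (T *m x + Q *m y) k 0.
Proof. by rewrite /= lin_cat !lin_mx [RHS]mxE. Qed.
Lemma rowN_lin k x y : lin (rowN k).1 (catf (vc x) (vc y)) = - (T *m x + Q *m y) k 0.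
Proof. by rewrite /= lin_cat !linNl !lin_mx [in RHS]mxE opprD. Qed.
Lemma rowX_lin i x y : lin (rowX i).1 (catf (vc x) (vc y)) = - (map_mx ratr AX *m x) i 0.
Proof. by rewrite /= lin_cat linNl lin0l AXmul addr0. Qed.
Lemma rowY_lin i x y : lin (rowY i).1 (catf (vc x) (vc y)) = - (map_mx ratr AY *m y) i 0.
Proof. by rewrite /= lin_cat linNl lin0l AYmul add0r. Qed.

Lemma sys_sat x y : X x -> Y y -> T *m x + Q *m y = h ->
  sat sys (catf (vc x) (vc y)).
Proof.
move=> hx hy e c.
move=> /List.in_app_iff [/List.in_map_iff [i [<- _]]|].
  by rewrite rowX_lin /= lerN2; apply: hx.
move=> /List.in_app_iff [/List.in_map_iff [i [<- _]]|].
  by rewrite rowY_lin /= lerN2; apply: hy.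
move=> /List.in_app_iff [/List.in_map_iff [i [<- _]]|/List.in_map_iff [i [<- _]]].
  by rewrite rowP_lin e.
by rewrite rowN_lin e.
Qed.

Lemma sat_sys x y : sat sys (catf (vc x) (vc y)) ->
  X x /\ Y y /\ T *m x + Q *m y = h.
Proof.
move=> hs; split; [|split].
- move=> i; have := hs (rowX i).
  rewrite rowX_lin /= lerN2; apply; apply/List.in_app_iff; left.
  exact/List.in_map/in_enum_list.
- move=> i; have := hs (rowY i).
  rewrite rowY_lin /= lerN2; apply; apply/List.in_app_iff; right.
  apply/List.in_app_iff; left; exact/List.in_map/in_enum_list.
- apply/matrixP => k j; rewrite [j]ord1; apply/eqP; rewrite eq_le; apply/andP; split.
    have := hs (rowN k); rewrite rowN_lin /= lerN2; apply.
    do 3 (apply/List.in_app_iff; right); exact/List.in_map/in_enum_list.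
  have := hs (rowP k); rewrite rowP_lin /=; apply.
  do 2 (apply/List.in_app_iff; right); apply/List.in_app_iff; left.
  exact/List.in_map/in_enum_list.
Qed.

Lemma z_cat (z : 'I_(n + m) -> R) i :
  z i = catf (vc (\col_j z (lshift m j))) (vc (\col_j z (rshift n j))) i.
Proof.
rewrite /catf -{1}(splitK i); case: (fintype.split i) => j /=; by rewrite /vc mxE.
Qed.

Definition Good (A : 'I_(n + m) -> R) (B : R) := exists al : 'cV[R]_p,
  forall x y, X x -> Y y ->
    B <= lin A (catf (vc x) (vc y)) + dotv al (T *m x + Q *m y - h).

Definition dlt (k : 'I_p) (s : R) : 'cV[R]_p := \col_i (if i == k then s else 0).
Lemma dotv_dlt k s w : dotv (dlt k s) w = s * w k 0.
Proof.
rewrite /dotv (bigD1 k) //= big1 ?addr0; first by rewrite mxE eqxx.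
by move=> i /negPf ik; rewrite mxE ik mul0r.
Qed.

Lemma der_good A B : der sys A B -> Good A B.
Proof.
elim=> {A B}.
- move=> A B.
  move=> /List.in_app_iff [/List.in_map_iff [i [e _]]|].
    exists 0 => x y hx hy; rewrite dotv0l addr0.
    move: (rowX_lin i x y); rewrite e /= => ->; move: e; rewrite /rowX => -[_ <-].
    by rewrite lerN2; apply: hx.
  move=> /List.in_app_iff [/List.in_map_iff [i [e _]]|].
    exists 0 => x y hx hy; rewrite dotv0l addr0.
    move: (rowY_lin i x y); rewrite e /= => ->; move: e; rewrite /rowY => -[_ <-].
    by rewrite lerN2; apply: hy.
  move=> /List.in_app_iff [/List.in_map_iff [i [e _]]|/List.in_map_iff [i [e _]]].
    exists (dlt i (-1)) => x y hx hy; rewrite dotv_dlt.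
    move: (rowP_lin i x y); rewrite e /= => ->; move: e; rewrite /rowP => -[_ <-].
    by rewrite !mxE; lra.
  exists (dlt i 1) => x y hx hy; rewrite dotv_dlt.
  move: (rowN_lin i x y); rewrite e /= => ->; move: e; rewrite /rowN => -[_ <-].
  by rewrite !mxE; lra.
- move=> B B0; exists 0 => x y _ _; by rewrite dotv0l lin0l addr0.
- move=> A1 B1 A2 B2 _ [a1 h1] _ [a2 h2]; exists (a1 + a2) => x y hx hy.
  rewrite linDl dotvDl; have := h1 x y hx hy; have := h2 x y hx hy; lra.
- move=> l A B l0 _ [a1 h1]; exists (l *: a1) => x y hx hy.
  rewrite linZl dotvZl -mulrDr; apply: ler_wpM2l => //; exact: h1.
- move=> A B B' hB _ [a1 h1]; exists a1 => x y hx hy.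
  by apply: le_trans hB (h1 x y hx hy).
- move=> A A' B e _ [a1 h1]; exists a1 => x y hx hy.
  by rewrite -(lin_ext_eql _ e); apply: h1.
Qed.

End App.

Local Open Scope classical_set_scope.
Section Main.
Variable R : realType.
Variables (n m p kX kY : nat) (AX : 'M[rat]_(kX, n)) (bX : 'cV[rat]_kX)
  (AY : 'M[rat]_(kY, m)) (bY : 'cV[rat]_kY)
  (T : 'M[R]_(p, n)) (Q : 'M[R]_(p, m)) (h : 'cV[R]_p) (d : 'cV[R]_m)
  (rho : 'cV[R]_n) (rho0 : R).

Local Notation X := (@polyhedron R _ _ AX bX).
Local Notation Y := (@polyhedron R _ _ AY bY).
Local Notation F := (feasF X Y T Q h d).
Local Notation dobj := (dualobj X Y T Q h d rho rho0).

Local Notation sysm := (sys AX bX AY bY T Q h).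
Hypotheses (X0 : X !=set0) (Y0 : Y !=set0) (r0 : 0 <= rho0).

Lemma inf_empty (S : set (\bar R)) : ~ (exists y, S y) -> ereal_inf S = +oo%E.
Proof.
move=> hS; apply/eqP; rewrite -leye_eq; apply/ereal_infP => y Sy.
by exfalso; apply: hS; exists y.
Qed.

Lemma supp_lb k (S : set 'cV[R]_k) u K :
  (forall x, S x -> K <= dotv u x) -> (K%:E <= supp S u)%E.
Proof. by move=> H; apply/ereal_infP => _ [x Sx <-]; rewrite lee_fin; apply: H. Qed.

Lemma supp_ub k (S : set 'cV[R]_k) u x : S x -> (supp S u <= (dotv u x)%:E)%E.
Proof. by move=> Sx; apply: ereal_inf_lbound; exists x. Qed.

Lemma supp_fin k (S : set 'cV[R]_k) u K : S !=set0 ->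
  (forall x, S x -> K <= dotv u x) -> exists r, supp S u = r%:E /\ K <= r.
Proof.
move=> [x0 S0] H; have h1 := supp_lb H; have h2 := supp_ub u S0.
move: (supp S u) h1 h2 => [r| |] h1 h2 //.
by exists r; split => //; rewrite -lee_fin.
Qed.

Lemma supp_cases k (S : set 'cV[R]_k) u : S !=set0 ->
  supp S u = -oo%E \/ exists r, supp S u = r%:E.
Proof.
move=> [x0 S0]; have h2 := supp_ub u S0.
move: (supp S u) h2 => [r| |] h2 //; [right; by exists r | by left].
Qed.

Lemma fiber_ne w th : (fval Y Q d w <= th%:E)%E -> exists y, Y y /\ Q *m y = w.
Proof.
move=> hf; apply: contrapT => hne.
have e : fval Y Q d w = +oo%E.
  by apply: inf_empty => -[_ [y [Yy ey] _]]; apply: hne; exists y.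
by rewrite e in hf.
Qed.

Lemma fiber_lb w th K : (fval Y Q d w <= th%:E)%E ->
  (forall y, Y y -> Q *m y = w -> K <= rho0 * dotv d y) -> K <= rho0 * th.
Proof.
move=> hf H.
have [y0 [Yy0 ey0]] := fiber_ne hf.
move: r0; rewrite le_eqVlt => /orP[/eqP r00|r0p].
  by have := H _ Yy0 ey0; rewrite -r00 !mul0r.
have h2 : ((rho0^-1 * K)%:E <= fval Y Q d w)%E.
  apply/ereal_infP => _ [y [Yy ey] <-]; rewrite lee_fin ler_pdivrMl //.
  exact: H.
by have := le_trans h2 hf; rewrite lee_fin ler_pdivrMl.
Qed.

Lemma weak a : (dobj a <= supp2 F rho rho0)%E.
Proof.
apply/ereal_infP => _ [[x th] [/= hx hepi] <-] /=.
rewrite /dualobj.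
have [->|[rX eX]] := supp_cases (rho + T^T *m a) X0.
  by rewrite addeNy addNye leNye.
have [->|[rY eY]] := supp_cases (Q^T *m a + rho0 *: d) Y0.
  by rewrite addeNy leNye.
rewrite eX eY -!EFinD lee_fin.
have hrX : rX <= dotv (rho + T^T *m a) x by rewrite -lee_fin -eX; apply: supp_ub.
have e1 : dotv (rho + T^T *m a) x = dotv rho x + dotv a (T *m x).
  by rewrite dotvDl dotv_mul.
suff : - dotv a h + rX + rY - dotv rho x <= rho0 * th by lra.
apply: (fiber_lb hepi) => y Yy ey.
have := supp_ub (Q^T *m a + rho0 *: d) Yy.
rewrite eY lee_fin dotvDl -dotv_mul dotvZl ey dotvDr dotvNr.
lra.
Qed.

Lemma strong v : supp2 F rho rho0 = v%:E -> exists al, (v%:E <= dobj al)%E.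
Proof.
move=> hv.
have [[x0 th0] [/= hx0 hepi0]] : exists z, F z.
  apply: contrapT => hne.
  have : supp2 F rho rho0 = +oo%E.
    by apply: inf_empty => -[_ [z Fz _]]; apply: hne; exists z.
  by rewrite hv.
have [y0 [hy0 ey0]] := fiber_ne hepi0.
pose a := catf (vc rho) (fun j => rho0 * d j 0).
have feas : exists z, sat sysm z.
  exists (catf (vc x0) (vc y0)); apply: sys_sat => //.
  by rewrite ey0 addrC subrK.
have imp : forall z, sat sysm z -> v <= lin a z.
  move=> z hz.
  set x := \col_j z (lshift m j); set y := \col_j z (rshift n j).
  have hz' : sat sysm (catf (vc x) (vc y)).
    by move=> c hc; rewrite -(lin_ext_eq _ (z_cat z)); apply: hz.
  have [hx [hy he]] := sat_sys hz'.
  rewrite (lin_ext_eq _ (z_cat z)) lin_cat linZl -/x -/y.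
  have Fm : F (x, dotv d y).
    split => //=; apply: ereal_inf_lbound; exists y => //; split => //.
    by rewrite -he addrAC subrr add0r.
  have : (supp2 F rho rho0 <= (dotv rho x + rho0 * dotv d y)%:E)%E.
    by apply: ereal_inf_lbound; exists (x, dotv d y).
  by rewrite hv lee_fin.
have [al hal] := der_good (farkas_aff feas imp).
have key : forall x y, X x -> Y y ->
    v + dotv al h <= dotv (rho + T^T *m al) x + dotv (Q^T *m al + rho0 *: d) y.
  move=> x y hx hy; have := hal x y hx hy.
  rewrite lin_cat linZl !dotvDl -!dotv_mul dotvZl !dotvDr dotvNr.
  rewrite /lin /dotv; lra.
have [y1 hy1] := Y0.
have [rX [eX hX]] : exists r, supp X (rho + T^T *m al) = r%:E /\
    v + dotv al h - dotv (Q^T *m al + rho0 *: d) y1 <= r.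
  by apply: supp_fin X0 _ => x hx; have := key x y1 hx hy1; lra.
have [rY [eY hY]] : exists r, supp Y (Q^T *m al + rho0 *: d) = r%:E /\
    v + dotv al h - rX <= r.
  apply: supp_fin Y0 _ => y hy.
  have : ((v + dotv al h - dotv (Q^T *m al + rho0 *: d) y)%:E <= supp X (rho + T^T *m al))%E.
    by apply: supp_lb => x hx; have := key x y hx hy; lra.
  rewrite eX lee_fin; lra.
exists al; rewrite /dualobj eX eY -!EFinD lee_fin; lra.
Qed.

Lemma part2 ahat x th : X x ->
  (supp2 (epi Y Q d) ahat rho0 <= (dotv ahat (h - T *m x) + rho0 * th)%:E)%E ->
  (dobj ahat <= (dotv rho x + rho0 * th)%:E)%E.
Proof.
move=> hx hcut; rewrite /dualobj.
have [->|[rX eX]] := supp_cases (rho + T^T *m ahat) X0.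
  by rewrite addeNy addNye leNye.
have [->|[rY eY]] := supp_cases (Q^T *m ahat + rho0 *: d) Y0.
  by rewrite addeNy leNye.
rewrite eX eY -!EFinD lee_fin.
have hrX : rX <= dotv (rho + T^T *m ahat) x by rewrite -lee_fin -eX; apply: supp_ub.
have e1 : dotv (rho + T^T *m ahat) x = dotv rho x + dotv ahat (T *m x).
  by rewrite dotvDl dotv_mul.
have hY : (rY%:E <= supp2 (epi Y Q d) ahat rho0)%E.
  apply/ereal_infP => _ [[w th'] hepi <-] /=; rewrite lee_fin.
  suff : rY - dotv ahat w <= rho0 * th' by lra.
  apply: (fiber_lb hepi) => y Yy ey.
  have := supp_ub (Q^T *m ahat + rho0 *: d) Yy.
  rewrite eY lee_fin dotvDl -dotv_mul dotvZl ey; lra.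
have := le_trans hY hcut; rewrite lee_fin dotvDr dotvNr; lra.
Qed.

Lemma main_app :
  supp2 F rho rho0 \is a fin_num ->
  (exists a_opt : 'cV[R]_p,
      (forall a : 'cV[R]_p, (dobj a <= dobj a_opt)%E)
      /\ dobj a_opt = supp2 F rho rho0)
  /\
  (forall ahat : 'cV[R]_p,
      (forall a : 'cV[R]_p, (dobj a <= dobj ahat)%E) ->
      forall (x : 'cV[R]_n) (theta : R), X x ->
        (supp2 (epi Y Q d) ahat rho0 <= (dotv ahat (h - T *m x) + rho0 * theta)%:E)%E ->
        (supp2 F rho rho0 <= (dotv rho x + rho0 * theta)%:E)%E).
Proof.
move=> hfin.
have hv : supp2 F rho rho0 = (fine (supp2 F rho rho0))%:E by rewrite fineK.
have [al hal] := strong hv.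
have eal : dobj al = supp2 F rho rho0.
  by apply/le_anti; rewrite weak /= hv hal.
split.
  by exists al; split => // a; rewrite eal; apply: weak.
move=> ahat hopt x th hx hcut.
rewrite hv; apply: le_trans (le_trans hal (hopt al)) (part2 hx hcut).
Qed.

End Main.

Unset Implicit Arguments.
Theorem mainTheorem3 (R : realType) (n m p kX kY : nat)
  (AX : 'M[rat]_(kX, n)) (bX : 'cV[rat]_kX)
  (AY : 'M[rat]_(kY, m)) (bY : 'cV[rat]_kY)
  (T : 'M[R]_(p, n)) (Q : 'M[R]_(p, m)) (h : 'cV[R]_p)
  (c : 'cV[R]_n) (d : 'cV[R]_m) (rho : 'cV[R]_n) (rho0 : R) :
  let X := @polyhedron R _ _ AX bX in
  let Y := @polyhedron R _ _ AY bY in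
  X !=set0 -> Y !=set0 -> pointed Y ->
  0 <= rho0 ->
  supp2 (feasF X Y T Q h d) rho rho0 \is a fin_num ->
  (exists a_opt : 'cV[R]_p,
      (forall a : 'cV[R]_p,
         (dualobj X Y T Q h d rho rho0 a <= dualobj X Y T Q h d rho rho0 a_opt)%E)
      /\ dualobj X Y T Q h d rho rho0 a_opt = supp2 (feasF X Y T Q h d) rho rho0)
  /\
  (forall ahat : 'cV[R]_p,
      (forall a : 'cV[R]_p,
         (dualobj X Y T Q h d rho rho0 a <= dualobj X Y T Q h d rho rho0 ahat)%E) ->
      forall (x : 'cV[R]_n) (theta : R), X x ->
        (supp2 (epi Y Q d) ahat rho0 <= (dotv ahat (h - T *m x) + rho0 * theta)%:E)%E ->
        (supp2 (feasF X Y T Q h d) rho rho0 <= (dotv rho x + rho0 * theta)%:E)%E).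
Proof.
move=> X Y hX hY _ r0 hfin.
exact: (main_app hX hY r0 hfin).
Qed.
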